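(* Let $C=(1,c_2,c_3,c_4,c_5,c_6)$ be a system and $\ell=\lceil c_5/c_3\rceil$, and suppose $C$ satisfies (a), (b), or (c): (a) $C=(1,2,3,c_4,c_4+1,2c_4)$ and $c_4>4$; (b) $C=(1,c_2,2c_2-1,c_4,c_2+c_4-1,2c_4-1)$, $c_4\ge 3c_2-1$, $\mathrm{grd}_C(\ell c_3)\le\ell$, and $\mathrm{grd}_C(\ell c_3)=\ell c_3-c_5+1-\lfloor(\ell c_3-c_5)/c_2\rfloor(c_2-1)$; (c) $C=(1,c_2,2c_2,c_4,c_2+c_4,2c_4)$, $c_4\ge 3c_2-1$, $c_4\ne 3c_2$, $\mathrm{grd}_C(\ell c_3)\le\ell$, and $\mathrm{grd}_C(\ell c_3)=\ell c_3-c_5+1-\lfloor(\ell c_3-c_5)/c_2\rfloor(c_2-1)$. Then $C$ is canonical and the subsystem $(1,c_2,c_3,c_4,c_5)$ is noncanonical.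
   Context: A system is a tuple $C=(c_1,\dots,c_n)$ of integers with $1=c_1<c_2<\dots<c_n$; for $k\le n$, $(c_1,\dots,c_k)$ is a subsystem. For a positive integer $v$, $\mathrm{opt}_C(v)$ is the minimum of $\sum_i x_i$ over $x\in\mathbb{Z}_{\ge0}^n$ with $\sum_i c_ix_i=v$. The greedy representation of $v$ is produced by: for $i=n$ down to $1$, while $c_i\le$ remaining value, take a coin $c_i$. $\mathrm{grd}_C(v)$ is its number of coins. A positive integer $w$ is a counterexample if $\mathrm{opt}_C(w)<\mathrm{grd}_C(w)$; $C$ is canonical if it has none, noncanonical otherwise. *)

(* Defs.v *)
From mathcomp Require Import all_boot.
Set Implicit Arguments. Unset Strict Implicit. Unset Printing Implicit Defensive.

Definition is_system (C : seq nat) : Prop :=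
  head 0 C = 1 /\ sorted ltn C.

Definition is_repr (C : seq nat) (x : seq nat) (v : nat) : Prop :=
  size x = size C /\ \sum_(i < size C) nth 0 C i * nth 0 x i = v.

Definition ncoins (x : seq nat) : nat := \sum_(k <- x) k.

Fixpoint grd_desc (cs : seq nat) (v : nat) : nat :=
  match cs with
  | [::] => 0
  | c :: cs' => v %/ c + grd_desc cs' (v %% c)
  end.

Definition grd (C : seq nat) (v : nat) : nat := grd_desc (rev C) v.

Definition counterexample (C : seq nat) (w : nat) : Prop :=
  0 < w /\ exists x, is_repr C x w /\ ncoins x < grd C w.

Definition canonical (C : seq nat) : Prop :=
  forall w, ~ counterexample C w.

Definition noncanonical (C : seq nat) : Prop :=
  exists w, counterexample C w.

(* Main.v *)
From mathcomp Require Import all_boot.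
From mathcomp Require Import zify.
Require Import Defs.

Lemma hk a P x k : 0 < P -> grd_desc [:: P; a; 1] (x + k * P) = grd_desc [:: P; a; 1] x + k.
Proof.
move=> P0; rewrite /= !divn1 [x + _]addnC divnMDl // modnMDl; lia.
Qed.

Lemma hs1 a P y : y < a -> a < P -> grd_desc [:: P; a; 1] y = y.
Proof.
move=> ya aP; rewrite /= !divn1 (divn_small (ltn_trans ya aP)) (modn_small (ltn_trans ya aP)).
rewrite divn_small // modn_small //; lia.
Qed.

Lemma hs2 a P y : a <= y -> y < P -> P <= 2 * a -> grd_desc [:: P; a; 1] y = (y - a).+1.
Proof.
move=> ay yP P2; rewrite /= !divn1 (divn_small yP) (modn_small yP).
have -> : y = 1 * a + (y - a) by lia.
have a0 : 0 < a by lia.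
rewrite divnMDl // modnMDl divn_small ?modn_small; lia.
Qed.

Lemma hd a P x : 0 < P -> grd_desc [:: P; a; 1] x = grd_desc [:: P; a; 1] (x %% P) + x %/ P.
Proof. by move=> P0; rewrite {1}(divn_eq x P) addnC hk. Qed.

Lemma hsub a P x y : 1 < a -> (P = 2 * a - 1 \/ P = 2 * a) ->
  grd_desc [:: P; a; 1] (x + y) <= grd_desc [:: P; a; 1] x + grd_desc [:: P; a; 1] y.
Proof.
move=> a1 HP.
have P0 : 0 < P by lia.
rewrite (@hd a P x P0) (@hd a P y P0).
have rx := ltn_pmod x P0; have ry := ltn_pmod y P0.
have -> : x + y = (x %% P + y %% P) + (x %/ P + y %/ P) * P.
  by rewrite {1}(divn_eq x P) {1}(divn_eq y P); lia.
rewrite hk //.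
set r := x %% P; set r' := y %% P.
suff : grd_desc [:: P; a; 1] (r + r') <= grd_desc [:: P; a; 1] r + grd_desc [:: P; a; 1] r' by lia.
have aP : a < P by lia.
have P2 : P <= 2 * a by lia.
case: (ltnP r a) => Hr; [rewrite (@hs1 a P r Hr aP) | rewrite (@hs2 a P r Hr rx P2)];
(case: (ltnP r' a) => Hr'; [rewrite (@hs1 a P r' Hr' aP) | rewrite (@hs2 a P r' Hr' ry P2)]).
all: case: (ltnP (r + r') P) => Hs.
all: try (case: (ltnP (r + r') a) => Hs2; [rewrite (@hs1 a P _ Hs2 aP) | rewrite (@hs2 a P _ Hs2 Hs P2)]; lia).
all: have -> : r + r' = (r + r' - P) + 1 * P by lia.
all: rewrite hk //.
all: case: (ltnP (r + r' - P) a) => Hs2; [rewrite (@hs1 a P _ Hs2 aP) | rewrite (@hs2 a P _ Hs2 _ P2)]; lia.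
Qed.

Lemma hmono_b a P x : 1 < a -> P = 2 * a - 1 ->
  grd_desc [:: P; a; 1] x <= grd_desc [:: P; a; 1] (x + (a - 1)).
Proof.
move=> a1 HP.
have P0 : 0 < P by lia.
have aP : a < P by lia.
have P2 : P <= 2 * a by lia.
rewrite (@hd a P x P0).
have rx := ltn_pmod x P0.
have E := divn_eq x P.
set r := x %% P in rx E *; set q := x %/ P in E *.
case: (ltnP r a) => Hr.
  have -> : x + (a - 1) = (r + (a - 1)) + q * P by lia.
  rewrite hk // (@hs1 a P r Hr aP).
  case: (ltnP (r + (a - 1)) a) => H2; [rewrite (@hs1 a P _ H2 aP) | rewrite (@hs2 a P _ H2 _ P2)]; lia.
have -> : x + (a - 1) = (r - a) + (q + 1) * P by lia.
rewrite hk // (@hs2 a P r Hr rx P2) (@hs1 a P (r - a)) //; lia.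
Qed.

Lemma hmono_c a P x : 1 < a -> P = 2 * a ->
  grd_desc [:: P; a; 1] x <= grd_desc [:: P; a; 1] (x + a).
Proof.
move=> a1 HP.
have P0 : 0 < P by lia.
have aP : a < P by lia.
have P2 : P <= 2 * a by lia.
rewrite (@hd a P x P0).
have rx := ltn_pmod x P0.
have E := divn_eq x P.
set r := x %% P in rx E *; set q := x %/ P in E *.
case: (ltnP r a) => Hr.
  have -> : x + a = (r + a) + q * P by lia.
  rewrite hk // (@hs1 a P r Hr aP) (@hs2 a P (r + a)) //; lia.
have -> : x + a = (r - a) + (q + 1) * P by lia.
rewrite hk // (@hs2 a P r Hr rx P2) (@hs1 a P (r - a)) //; lia.
Qed.

Lemma hge2 a P y : 1 < a -> a < P -> P <= 2 * a -> P < y -> 2 <= grd_desc [:: P; a; 1] y.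
Proof.
move=> a1 aP P2 Py.
have P0 : 0 < P by lia.
rewrite (@hd a P y P0).
have rx := ltn_pmod y P0.
have E := divn_eq y P.
set r := y %% P in rx E *; set q := y %/ P in E *.
case: q E => [|[|q]] E; try lia.
case: (ltnP r a) => Hr; [rewrite (@hs1 a P r Hr aP) | rewrite (@hs2 a P r Hr rx P2)]; lia.
Qed.

Lemma hval a P y : 1 < a -> a < P -> P <= 2 * a -> y = 0 \/ y = 1 \/ y = a \/ y = P ->
  grd_desc [:: P; a; 1] y <= 1.
Proof.
move=> a1 aP P2 [|[|[|]]] ->.
- by rewrite (@hs1 a P 0) //; lia.
- by rewrite (@hs1 a P 1) //; lia.
- by rewrite (@hs2 a P a) //; lia.
- have P0 : 0 < P by lia.
  have := @hk a P 0 1 P0; rewrite add0n mul1n => ->; rewrite (@hs1 a P 0) //; lia.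
Qed.


Lemma gcons c cs v : grd_desc (c :: cs) v = v %/ c + grd_desc cs (v %% c).
Proof. by []. Qed.

Lemma grdE c2 c3 c4 c5 c6 v : grd [:: 1; c2; c3; c4; c5; c6] v =
  v %/ c6 + grd_desc [:: c5; c4; c3; c2; 1] (v %% c6).
Proof. by []. Qed.

Lemma divmod1 d s : s < d -> (d + s) %/ d = 1 /\ (d + s) %% d = s.
Proof.
move=> sd; have d0 : 0 < d by lia.
have -> : d + s = 1 * d + s by lia.
by rewrite divnMDl // modnMDl divn_small // modn_small.
Qed.

Lemma G5A c2 c3 c4 c5 u : u < c4 -> c4 < c5 ->
  grd_desc [:: c5; c4; c3; c2; 1] u = grd_desc [:: c3; c2; 1] u.
Proof.
move=> u4 h45; have u5 : u < c5 by lia.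
by rewrite gcons (divn_small u5) (modn_small u5) gcons (divn_small u4) (modn_small u4).
Qed.

Lemma G5B c2 c3 c4 c5 u : c4 <= u -> u < c5 -> c5 <= 2 * c4 ->
  grd_desc [:: c5; c4; c3; c2; 1] u = 1 + grd_desc [:: c3; c2; 1] (u - c4).
Proof.
move=> u4 u5 h; rewrite gcons (divn_small u5) (modn_small u5) gcons.
have -> : u = c4 + (u - c4) by lia.
have [-> ->] := @divmod1 c4 (u - c4) ltac:(lia).
by rewrite addKn.
Qed.

Lemma G5C c2 c3 c4 c5 c6 u : c5 <= u -> u < c6 -> c4 < c5 -> c6 <= 2 * c4 ->
  grd_desc [:: c5; c4; c3; c2; 1] u = 1 + grd_desc [:: c3; c2; 1] (u - c5).
Proof.
move=> u5 u6 h1 h2; rewrite gcons.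
have -> : u = c5 + (u - c5) by lia.
have [-> ->] := @divmod1 c5 (u - c5) ltac:(lia).
rewrite addKn gcons divn_small ?modn_small //; lia.
Qed.

Lemma grd_shift c2 c3 c4 c5 c6 v k : 0 < c6 ->
  grd [:: 1; c2; c3; c4; c5; c6] (v + k * c6) = k + grd [:: 1; c2; c3; c4; c5; c6] v.
Proof.
move=> c60; rewrite !grdE [v + _]addnC divnMDl // modnMDl; lia.
Qed.


Definition Inv c2 c3 c4 c5 c6 v n := exists k, k * c6 <= v /\
  ( k + grd_desc [:: c3; c2; 1] (v - k * c6) <= n
  \/ (k * c6 + c4 <= v /\ k + 1 + grd_desc [:: c3; c2; 1] (v - k * c6 - c4) <= n)
  \/ (k * c6 + c5 <= v /\ k + 1 + grd_desc [:: c3; c2; 1] (v - k * c6 - c5) <= n)).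

Lemma InvM c2 c3 c4 c5 c6 c j :
  (forall v n, Inv c2 c3 c4 c5 c6 v n -> Inv c2 c3 c4 c5 c6 (v + c) n.+1) ->
  forall v n, Inv c2 c3 c4 c5 c6 v n -> Inv c2 c3 c4 c5 c6 (v + c * j) (n + j).
Proof.
move=> S; elim: j => [|j IH] v n H; first by rewrite muln0 !addn0.
have := S _ _ (IH _ _ H).
by rewrite mulnS addnS -addnA [c * j + c]addnC addnA.
Qed.

Lemma generic_canon c2 c3 c4 c5 c6 :
  1 < c2 -> c2 < c3 -> c3 < c4 -> c4 < c5 -> c5 < c6 -> c6 <= 2 * c4 ->
  (forall x y, grd_desc [:: c3; c2; 1] (x + y) <= grd_desc [:: c3; c2; 1] x + grd_desc [:: c3; c2; 1] y) ->
  grd_desc [:: c3; c2; 1] 1 <= 1 ->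
  grd_desc [:: c3; c2; 1] c2 <= 1 ->
  grd_desc [:: c3; c2; 1] c3 <= 1 ->
  grd_desc [:: c3; c2; 1] 0 = 0 ->
  grd_desc [:: c3; c2; 1] (2 * c4 - c6) <= 1 ->
  grd_desc [:: c3; c2; 1] (c4 + c5 - c6) <= 1 ->
  grd_desc [:: c3; c2; 1] (2 * c5 - c6) <= 1 ->
  (forall x, 1 + grd_desc [:: c3; c2; 1] x <= grd_desc [:: c3; c2; 1] (x + c6)) ->
  (forall x, grd_desc [:: c3; c2; 1] x <= grd_desc [:: c3; c2; 1] (x + (c6 - c4))) ->
  (forall x, grd_desc [:: c3; c2; 1] x <= grd_desc [:: c3; c2; 1] (x + (c6 - c5))) ->
  (forall s, s < c5 - c4 -> 1 + grd_desc [:: c3; c2; 1] s <= grd_desc [:: c3; c2; 1] (c4 + s)) ->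
  (forall s, s < c6 - c5 -> 1 + grd_desc [:: c3; c2; 1] s <= grd_desc [:: c3; c2; 1] (c5 + s)) ->
  (forall s, s < c6 - c5 -> grd_desc [:: c3; c2; 1] s <= grd_desc [:: c3; c2; 1] (s + (c5 - c4))) ->
  canonical [:: 1; c2; c3; c4; c5; c6].
Proof.
set h := grd_desc [:: c3; c2; 1].
set C := [:: 1; c2; c3; c4; c5; c6].
move=> o2 o3 o4 o5 o6 o7 hsub h1 hc2 hc3 h0 T1 T2 T3 R1 R2 R3 Q1 Q2a Q2b.
have c60 : 0 < c6 by lia.
have GB : forall u, [/\ grd C u <= h u,
    (c4 <= u -> grd C u <= 1 + h (u - c4)) & (c5 <= u -> grd C u <= 1 + h (u - c5))].
  move=> u; have [n] := ubnP u; elim: n u => // n IH u Hu.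
  case: (ltnP u c6) => u6.
    have -> : grd C u = grd_desc [:: c5; c4; c3; c2; 1] u.
      by rewrite /C grdE divn_small // modn_small.
    case: (ltnP u c4) => u4.
      rewrite G5A // -/h; split => //; lia.
    case: (ltnP u c5) => u5.
      rewrite G5B //; last lia.
      rewrite -/h; split; last (by move=> *; lia); last (by move=> *; lia).
      have := Q1 (u - c4) ltac:(lia); rewrite subnKC //.
    rewrite (@G5C c2 c3 c4 c5 c6) // -/h; split; last (by move=> *; lia).
    - have := Q2a (u - c5) ltac:(lia); rewrite subnKC //.
    - move=> _; have := Q2b (u - c5) ltac:(lia).
      have -> : u - c5 + (c5 - c4) = u - c4 by lia.
      lia.
  have -> : grd C u = 1 + grd C (u - c6).
    have := @grd_shift c2 c3 c4 c5 c6 (u - c6) 1 c60.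
    by rewrite mul1n subnK.
  have [I1 _ _] := IH (u - c6) ltac:(lia).
  split.
  - have := R1 (u - c6); rewrite subnK //; lia.
  - move=> _; have := R2 (u - c6).
    have -> : u - c6 + (c6 - c4) = u - c4 by lia. rewrite -/h; lia.
  - move=> _; have := R3 (u - c6).
    have -> : u - c6 + (c6 - c5) = u - c5 by lia. rewrite -/h; lia.
have InvG : forall v n, Inv c2 c3 c4 c5 c6 v n -> grd C v <= n.
  move=> v n [k [Hk H]]; rewrite -/h in H.
  have -> : grd C v = k + grd C (v - k * c6).
    have := @grd_shift c2 c3 c4 c5 c6 (v - k * c6) k c60.
    by rewrite subnK.
  have [B0 B1 B2] := GB (v - k * c6).
  case: H => [H|[[H1 H]|[H1 H]]].
  - lia.
  - have := B1 ltac:(lia); lia.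
  - have := B2 ltac:(lia); lia.
have Ssmall : forall c, h c <= 1 -> forall v n, Inv c2 c3 c4 c5 c6 v n -> Inv c2 c3 c4 c5 c6 (v + c) n.+1.
  move=> c hc v n [k [Hk H]]; rewrite -/h in H; exists k; split; first lia.
  case: H => [H|[[H1 H]|[H1 H]]].
  - left; have -> : v + c - k * c6 = (v - k * c6) + c by lia.
    have := hsub (v - k * c6) c. rewrite -/h. lia.
  - right; left; split; first lia.
    have -> : v + c - k * c6 - c4 = (v - k * c6 - c4) + c by lia.
    have := hsub (v - k * c6 - c4) c. rewrite -/h. lia.
  - right; right; split; first lia.
    have -> : v + c - k * c6 - c5 = (v - k * c6 - c5) + c by lia.
    have := hsub (v - k * c6 - c5) c. rewrite -/h. lia.
have S6 : forall v n, Inv c2 c3 c4 c5 c6 v n -> Inv c2 c3 c4 c5 c6 (v + c6) n.+1.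
  move=> v n [k [Hk H]]; rewrite -/h in H; exists k.+1; split; first lia.
  case: H => [H|[[H1 H]|[H1 H]]].
  - left; have -> : v + c6 - k.+1 * c6 = v - k * c6 by rewrite mulSn; lia. rewrite -/h; lia.
  - right; left; split; first by rewrite mulSn; lia.
    have -> : v + c6 - k.+1 * c6 - c4 = v - k * c6 - c4 by rewrite mulSn; lia. rewrite -/h; lia.
  - right; right; split; first by rewrite mulSn; lia.
    have -> : v + c6 - k.+1 * c6 - c5 = v - k * c6 - c5 by rewrite mulSn; lia. rewrite -/h; lia.
have S4 : forall v n, Inv c2 c3 c4 c5 c6 v n -> Inv c2 c3 c4 c5 c6 (v + c4) n.+1.
  move=> v n [k [Hk H]]; rewrite -/h in H.
  case: H => [H|[[H1 H]|[H1 H]]].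
  - exists k; split; first lia. right; left; split; first lia.
    have -> : v + c4 - k * c6 - c4 = v - k * c6 by lia. rewrite -/h; lia.
  - exists k.+1; split; first by rewrite mulSn; lia. left.
    have -> : v + c4 - k.+1 * c6 = (v - k * c6 - c4) + (2 * c4 - c6) by rewrite mulSn; lia.
    have := hsub (v - k * c6 - c4) (2 * c4 - c6). rewrite -/h. lia.
  - exists k.+1; split; first by rewrite mulSn; lia. left.
    have -> : v + c4 - k.+1 * c6 = (v - k * c6 - c5) + (c4 + c5 - c6) by rewrite mulSn; lia.
    have := hsub (v - k * c6 - c5) (c4 + c5 - c6). rewrite -/h. lia.
have S5 : forall v n, Inv c2 c3 c4 c5 c6 v n -> Inv c2 c3 c4 c5 c6 (v + c5) n.+1.
  move=> v n [k [Hk H]]; rewrite -/h in H.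
  case: H => [H|[[H1 H]|[H1 H]]].
  - exists k; split; first lia. right; right; split; first lia.
    have -> : v + c5 - k * c6 - c5 = v - k * c6 by lia. rewrite -/h; lia.
  - exists k.+1; split; first by rewrite mulSn; lia. left.
    have -> : v + c5 - k.+1 * c6 = (v - k * c6 - c4) + (c4 + c5 - c6) by rewrite mulSn; lia.
    have := hsub (v - k * c6 - c4) (c4 + c5 - c6). rewrite -/h. lia.
  - exists k.+1; split; first by rewrite mulSn; lia. left.
    have -> : v + c5 - k.+1 * c6 = (v - k * c6 - c5) + (2 * c5 - c6) by rewrite mulSn; lia.
    have := hsub (v - k * c6 - c5) (2 * c5 - c6). rewrite -/h. lia.
move=> w [w0 [x [[Hsz Hsum] Hlt]]].
case: x Hsz Hsum Hlt => [|x1 [|x2 [|x3 [|x4 [|x5 [|x6 [|]]]]]]] //= _.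
rewrite /ncoins !big_ord_recr big_ord0 !big_cons big_nil /= => Hsum Hlt.
have I0 : Inv c2 c3 c4 c5 c6 0 0.
  exists 0; split => //; left; rewrite mul0n subn0 -/h h0 //.
have I1 := @InvM c2 c3 c4 c5 c6 1 x1 (Ssmall 1 h1) _ _ I0.
have I2 := @InvM c2 c3 c4 c5 c6 c2 x2 (Ssmall c2 hc2) _ _ I1.
have I3 := @InvM c2 c3 c4 c5 c6 c3 x3 (Ssmall c3 hc3) _ _ I2.
have I4 := @InvM c2 c3 c4 c5 c6 c4 x4 S4 _ _ I3.
have I5 := @InvM c2 c3 c4 c5 c6 c5 x5 S5 _ _ I4.
have I6 := @InvM c2 c3 c4 c5 c6 c6 x6 S6 _ _ I5.
have := InvG _ _ I6.
have -> : 0 + 1 * x1 + c2 * x2 + c3 * x3 + c4 * x4 + c5 * x5 + c6 * x6 = w by rewrite -Hsum; lia.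
lia.
Qed.


Lemma canon_bc a P b m d : 1 < a -> (P = 2 * a - 1 \/ P = 2 * a) -> P < b ->
  m.+1 * P = b + P - a + d -> d < P -> 1 + grd_desc [:: P; a; 1] d <= m.+1 ->
  canonical [:: 1; a; P; b; b + P - a; 2 * b + P - 2 * a].
Proof.
set h := grd_desc [:: P; a; 1].
move=> a1 HP Pb Em dP hd.
have P0 : 0 < P by lia.
have aP : a < P by lia.
have P2 : P <= 2 * a by lia.
have hs : forall x y, h (x + y) <= h x + h y by move=> x y; apply: hsub.
have hK : forall x k, h (x + k * P) = h x + k by move=> x k; apply: hk.
have hv : forall y, y = 0 \/ y = 1 \/ y = a \/ y = P -> h y <= 1 by move=> y Hy; apply: hval.
have hS1 : forall y, y < a -> h y = y by move=> y Hy; apply: hs1.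
have hS2 : forall y, a <= y -> y < P -> h y = (y - a).+1 by move=> y H1 H2; apply: hs2.
have h0 : h 0 = 0 by apply: hS1; lia.
apply: generic_canon; rewrite -/h; try lia.
- exact: hs.
- by apply: hv; lia.
- by apply: hv; lia.
- by apply: hv; lia.
- by apply: hv; lia.
- by apply: hv; lia.
- by apply: hv; lia.
- move=> x.
  have E : x + (2 * b + P - 2 * a) + 2 * d = x + (2 * m + 1) * P by lia.
  have := hs (x + (2 * b + P - 2 * a)) (2 * d); rewrite E hK.
  have := hs d d; rewrite addnn -mul2n; lia.
- move=> x.
  have E : x + (2 * b + P - 2 * a - b) + (a + d) = x + m.+1 * P by lia.
  have := hs (x + (2 * b + P - 2 * a - b)) (a + d); rewrite E hK.
  have := hs a d; have := hv a ltac:(lia); lia.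
- move=> x.
  have E : x + (2 * b + P - 2 * a - (b + P - a)) + d = x + m * P by lia.
  have := hs (x + (2 * b + P - 2 * a - (b + P - a))) d; rewrite E hK; lia.
- move=> s Hs.
  rewrite (hS1 s); last lia.
  case: (ltnP a d) => Hda.
  + have hdv : h d = (d - a).+1 by apply: hS2; lia.
    case: (leqP d (s + a)) => Hsd.
    * have -> : b + s = (s + a - d) + m * P by lia.
      rewrite hK hS1; lia.
    * case: m Em hd => [|m] Em hd; first lia.
      have -> : b + s = (P + s + a - d) + m * P by lia.
      rewrite hK hS2; lia.
  + have hdv : h d = if d < a then d else 1 by case: ltnP => H; [apply: hS1 | rewrite hS2]; lia.
    have -> : b + s = (a - d + s) + m * P by lia.
    rewrite hK.
    case: (ltnP (a - d + s) a) => H2; [rewrite hS1 | rewrite hS2]; move: hdv; case: ltnP; lia.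
- move=> s Hs.
  have E : b + P - a + s + d = s + m.+1 * P by lia.
  have := hs (b + P - a + s) d; rewrite E hK; lia.
- move=> s Hs.
  case: HP => HP.
  + have -> : b + P - a - b = a - 1 by lia. exact: hmono_b.
  + have -> : b + P - a - b = a by lia. exact: hmono_c.
Qed.


Lemma canon_a b : 3 < b -> canonical [:: 1; 2; 3; b; b + 1; 2 * b].
Proof.
set h := grd_desc [:: 3; 2; 1].
move=> b3.
have hs : forall x y, h (x + y) <= h x + h y by move=> x y; apply: hsub; lia.
have hK : forall x k, h (x + k * 3) = h x + k by move=> x k; apply: hk.
have hv : forall y, y = 0 \/ y = 1 \/ y = 2 \/ y = 3 -> h y <= 1 by move=> y Hy; apply: hval.
have h0 : h 0 = 0 by []. have h1 : h 1 = 1 by [].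
have hm1 : forall x, h x <= h (x + 1) by move=> x; apply: (@hmono_b 2 3 x).
have hm : forall x k, h x <= h (x + k).
  move=> x k; elim: k => [|k IH]; first by rewrite addn0.
  by apply: (leq_trans IH); rewrite addnS -addn1; apply: hm1.
have h3 : forall x, h (x + 3) = h x + 1 by move=> x; have := hK x 1; rewrite mul1n.
apply: generic_canon; rewrite -/h; try lia. all: try (by apply: hv; lia). all: try done. all: try (by move=> *; apply: hm). all: try exact: hs.
- move=> x. have -> : x + 2 * b = (x + 3) + (2 * b - 3) by lia.
  have := hm (x + 3) (2 * b - 3); rewrite h3; lia.
- move=> s Hs; have -> : s = 0 by lia.
  have := hm 1 (b - 1); have -> : 1 + (b - 1) = b + 0 by lia.
  rewrite h0 h1; lia.
- move=> s Hs; have -> : b + 1 + s = (s + 3) + (b - 2) by lia.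
  have := hm (s + 3) (b - 2); rewrite h3; lia.
Qed.


Lemma noncanon c2 c3 c4 c5 : 0 < c4 -> c4 < c5 -> c5 <= 2 * c4 ->
  2 <= grd_desc [:: c3; c2; 1] (2 * c4 - c5) -> noncanonical [:: 1; c2; c3; c4; c5].
Proof.
move=> c40 h45 h5 H.
exists (2 * c4); split; first lia.
exists [:: 0; 0; 0; 2; 0]; split.
  split => //. rewrite !big_ord_recr big_ord0 /=; lia.
rewrite /ncoins !big_cons big_nil /=.
have -> : grd [:: 1; c2; c3; c4; c5] (2 * c4) = grd_desc [:: c5; c4; c3; c2; 1] (2 * c4) by [].
rewrite gcons.
have -> : 2 * c4 = c5 + (2 * c4 - c5) by lia.
have [-> ->] := @divmod1 c5 (2 * c4 - c5) ltac:(lia).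
rewrite gcons divn_small ?modn_small; try lia.
Qed.

Theorem theorem10 (c2 c3 c4 c5 c6 : nat) :
  let C := [:: 1; c2; c3; c4; c5; c6] in
  let l := (c5 + c3 - 1) %/ c3 in
  is_system C ->
  [/\ c2 = 2, c3 = 3, c5 = c4 + 1, c6 = 2 * c4 & 4 < c4]
  \/ ([/\ c3 = 2 * c2 - 1, c5 = c2 + c4 - 1, c6 = 2 * c4 - 1 & 3 * c2 - 1 <= c4]
      /\ grd C (l * c3) <= l
      /\ grd C (l * c3) = l * c3 - c5 + 1 - ((l * c3 - c5) %/ c2) * (c2 - 1))
  \/ ([/\ c3 = 2 * c2, c5 = c2 + c4, c6 = 2 * c4, 3 * c2 - 1 <= c4 & c4 != 3 * c2]
      /\ grd C (l * c3) <= l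
      /\ grd C (l * c3) = l * c3 - c5 + 1 - ((l * c3 - c5) %/ c2) * (c2 - 1)) ->
  canonical C /\ noncanonical [:: 1; c2; c3; c4; c5].
Proof.
move=> C l [_ Hs]; rewrite {}/C in Hs *.
move: Hs => /= /and5P [o1 o2 o3 o4 /andP [o5 _]].
case=> [[E2 E3 E5 E6 H4]|[[[E3 E5 E6 H4] [Hg _]]|[[E3 E5 E6 H4 H5] [Hg _]]]].
- subst; split; first by apply: canon_a; lia.
  apply: noncanon; try lia.
  have -> : 2 * c4 - (c4 + 1) = c4 - 1 by lia.
  apply: (@hge2 2 3); lia.
all: have c30 : 0 < c3 by lia.
all: have L1 := leq_trunc_div (c5 + c3 - 1) c3.
all: have L2 := ltn_ceil (c5 + c3 - 1) c30.
all: rewrite -/l in L1 L2; rewrite mulSn in L2.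
all: have Lc5 : c5 <= l * c3 by lia.
- have Lc6 : l * c3 < c6 by lia.
  have gl : grd [:: 1; c2; c3; c4; c5; c6] (l * c3) = 1 + grd_desc [:: c3; c2; 1] (l * c3 - c5).
    rewrite grdE divn_small // modn_small // (@G5C c2 c3 c4 c5 c6) //; lia.
  rewrite gl in Hg.
  clearbody l; case: l Hg Lc5 L1 L2 Lc6 {gl} => [|m] Hg Lc5 L1 L2 Lc6; first lia.
  split.
    have -> : c5 = c4 + c3 - c2 by lia.
    have -> : c6 = 2 * c4 + c3 - 2 * c2 by lia.
    apply: (@canon_bc c2 c3 c4 m (m.+1 * c3 - c5)); try lia.
  apply: noncanon; try lia.
  apply: (@hge2 c2 c3); lia.
- have Lc6 : l * c3 < c6.
    case: (leqP l 2) => HL; [have := leq_mul HL (leqnn c3) | have := leq_mul HL (leqnn c3)]; lia.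
  have gl : grd [:: 1; c2; c3; c4; c5; c6] (l * c3) = 1 + grd_desc [:: c3; c2; 1] (l * c3 - c5).
    rewrite grdE divn_small // modn_small // (@G5C c2 c3 c4 c5 c6) //; lia.
  rewrite gl in Hg.
  clearbody l; case: l Hg Lc5 L1 L2 Lc6 {gl} => [|m] Hg Lc5 L1 L2 Lc6; first lia.
  split.
    have -> : c5 = c4 + c3 - c2 by lia.
    have -> : c6 = 2 * c4 + c3 - 2 * c2 by lia.
    apply: (@canon_bc c2 c3 c4 m (m.+1 * c3 - c5)); try lia.
  apply: noncanon; try lia.
  case: (ltnP (3 * c2) c4) => Hb.
    apply: (@hge2 c2 c3); lia.
  have -> : 2 * c4 - c5 = c3 - 1 by move/eqP: H5; lia.
  rewrite (@hs2 c2 c3); lia.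
Qed.
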